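(* There is a formula $\phi_{sm}(O_{id},g_{id},t_s,t_f)$ of the language $\mathcal{L}_{mo}$ such that, for every database instance with a MOFT $\mathcal{M}$ and a PIA $\mathcal{P}$ stored as described in the context, the set of tuples satisfying $\phi_{sm}$ is exactly the SM-MOFT $\mathcal{M}^{sm}$ of $\mathcal{M}$ with respect to $\mathcal{P}$.
   Context: Trajectories and stops: a trajectory is a list $\langle (t_0,x_0,y_0),\dots,(t_n,x_n,y_n)\rangle$ of points of $\mathbb{R}^3$ with $t_0<\dots<t_n$. A place of interest (PoI) is a pair $C=(R_C,\Delta_C)$ with $R_C\subseteq\mathbb{R}^2$ a topologically closed polygon, polyline or point and $\Delta_C>0$ real (minimum duration); a PIA is a finite set $\mathcal{P}=\{C_1,\dots,C_N\}$ of PoIs with mutually disjoint geometries. A stop of $T$ w.r.t. $\mathcal{P}$ is a maximal contiguous subtrajectory $\langle (t_i,x_i,y_i),\dots,(t_{i+\ell},x_{i+\ell},y_{i+\ell})\rangle$ such that for some $k$, all $(x_{i+j},y_{i+j})\in R_{C_k}$ ($j=0,\dots,\ell$) and $t_{i+\ell}-t_i>\Delta_{C_k}$; it is a stop in $C_k$ with stop interval $[t_i,t_{i+\ell}]$. A MOFT $\mathcal{M}$ is a finite relation with schema $(O_{id},T,X,Y)$; for each identifier $O_{id}$ its tuples, ordered by time, form a trajectory (with rational coordinates). The SM-MOFT $\mathcal{M}^{sm}$ of $\mathcal{M}$ w.r.t. $\mathcal{P}$ is the set of tuples $(O_{id},g_{id},t_s,t_f)$ such that $O_{id}$ is the identifier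 of a trajectory in $\mathcal{M}$, $g_{id}$ is the identifier of the geometry of a PoI $C_k\in\mathcal{P}$, and the trajectory of $O_{id}$ has a stop in $C_k$ with stop interval $[t_s,t_f]$. Storage of the PIA: the geometries of the PoIs are the geometric elements of a GIS layer $L_{PoI}$, with a rollup relation $r_{L_{PoI}}^{Pt\to G}(x,y,g)$ stating that point $(x,y)$ lies in the geometry with identifier $g$ (given by linear constraints with rational coefficients); in the OLAP part the PoIs are elements $p_{id}$ of the bottom level $PoI_b$ of PoI dimensions $D$, with a relation $\alpha_{L_{PoI},D}^{PoI_b\to G}(p_{id})=g_{id}$ linking each PoI to its geometry identifier, and the minimum duration $\Delta$ of a PoI is stored as an attribute of $PoI_b$, accessed by an attribute function $\beta_{D}^{PoI_b\to \mathrm{duration}}$. The language $\mathcal{L}_{mo}$: multi-sorted first-order logic with real variables (ranging over $\mathbb{R}$), name variables (object identifiers), geometric identifier variables and dimension-level variables; atomic formulas use OLAP rollup functions $f_{D}^{A\to B}$, GIS rollup relations $r_{L}^{G_i\to G_j}$, relations $\alpha_{L,D}^{A\to G}$, attribute functions $\beta_{D}^{A\to B}$, alpha-numeric functions/relations/constants of the OLAP part, a 4-ary relation symbol for each MOFT, $+,\times,0,1,<$ on reals, and equality on all sorts; formulas are closed under Boolean connectives and quantification over all sorts, with standard semantics. *)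

(* Defs.v *)
From Stdlib Require Import Reals QArith Qreals List.
Open Scope R_scope.

Definition lin_constraint := (Q * Q * Q)%type.

Definition sat_constraint (c : lin_constraint) (x y : R) : Prop :=
  let '(a, b, d) := c in Q2R a * x + Q2R b * y <= Q2R d.

Record instance : Type := {
  Name : Type;
  Geo  : Type;
  PoI  : Type;
  moft : list (Name * R * R * R);             (* the MOFT M(Oid,T,X,Y) *)
  geos : list Geo;
  (* geometry of g: finite union of polyhedra given by rational linear
     constraints (disjunctive normal form) *)
  region : Geo -> list (list lin_constraint);
  pois : list PoI;
  alpha : PoI -> Geo;
  duration : PoI -> R
}.

Definition is_rational (r : R) : Prop := exists q : Q, r = Q2R q.

Definition in_region (I : instance) (g : Geo I) (x y : R) : Prop :=
  exists cs, In cs (region I g) /\ forall c, In c cs -> sat_constraint c x y.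

Definition rollup (I : instance) (x y : R) (g : Geo I) : Prop :=
  In g (geos I) /\ in_region I g x y.

Definition alpha_rel (I : instance) (p : PoI I) (g : Geo I) : Prop :=
  In p (pois I) /\ alpha I p = g.

Definition wf_instance (I : instance) : Prop :=
  (forall o t x y, In (o, t, x, y) (moft I) ->
      is_rational t /\ is_rational x /\ is_rational y) /\
  (* MOFT: for each object, tuples ordered by time form a trajectory
     (strictly increasing times, so one position per instant) *)
  (forall o t x y x' y', In (o, t, x, y) (moft I) -> In (o, t, x', y') (moft I) ->
      x = x' /\ y = y') /\
  (forall g, In g (geos I) <-> exists p, In p (pois I) /\ alpha I p = g) /\
  (forall p p', In p (pois I) -> In p' (pois I) -> alpha I p = alpha I p' -> p = p') /\
  (forall g g' x y, In g (geos I) -> In g' (geos I) -> g <> g' ->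
      in_region I g x y -> in_region I g' x y -> False) /\
  (forall p, In p (pois I) -> 0 < duration I p).

Definition pt_t (p : R * R * R) : R := fst (fst p).
Definition pt_x (p : R * R * R) : R := snd (fst p).
Definition pt_y (p : R * R * R) : R := snd p.

Definition is_trajectory_of (I : instance) (o : Name I) (tr : list (R * R * R)) : Prop :=
  (forall t x y, In (t, x, y) tr <-> In (o, t, x, y) (moft I)) /\
  (forall i, (S i < length tr)%nat ->
      pt_t (nth i tr (0, 0, 0)) < pt_t (nth (S i) tr (0, 0, 0))).

Definition stop_cond (I : instance) (tr : list (R * R * R)) (p : PoI I) (i l : nat) : Prop :=
  In p (pois I) /\
  (i + l < length tr)%nat /\
  (forall j, (j <= l)%nat ->
      let q := nth (i + j) tr (0, 0, 0) in in_region I (alpha I p) (pt_x q) (pt_y q)) /\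
  pt_t (nth (i + l) tr (0, 0, 0)) - pt_t (nth i tr (0, 0, 0)) > duration I p.

Definition stop_in (I : instance) (tr : list (R * R * R)) (p : PoI I) (ts tf : R) : Prop :=
  exists i l,
    stop_cond I tr p i l /\
    (forall i' l', (i' <= i)%nat -> (i + l <= i' + l')%nat ->
        (exists p', stop_cond I tr p' i' l') -> i' = i /\ l' = l) /\
    ts = pt_t (nth i tr (0, 0, 0)) /\ tf = pt_t (nth (i + l) tr (0, 0, 0)).

Definition in_SM_MOFT (I : instance) (o : Name I) (g : Geo I) (ts tf : R) : Prop :=
  exists tr, is_trajectory_of I o tr /\ tr <> nil /\
    exists p, In p (pois I) /\ alpha I p = g /\ stop_in I tr p ts tf.

Inductive sort := SReal | SName | SGeo | SPoI.

Inductive rterm :=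
| RVar : nat -> rterm
| RZero : rterm
| ROne : rterm
| RPlus : rterm -> rterm -> rterm
| RMult : rterm -> rterm -> rterm
| RBeta : nat -> rterm.

Inductive form :=
| FMoft  : nat -> rterm -> rterm -> rterm -> form
| FRollup : rterm -> rterm -> nat -> form
| FAlpha : nat -> nat -> form
| FLt    : rterm -> rterm -> form
| FEqR   : rterm -> rterm -> form
| FEqN   : nat -> nat -> form
| FEqG   : nat -> nat -> form
| FEqP   : nat -> nat -> form
| FTrue  : form
| FNot   : form -> form
| FAnd   : form -> form -> form
| FOr    : form -> form -> form
| FImp   : form -> form -> form
| FEx    : sort -> nat -> form -> form
| FAll   : sort -> nat -> form -> form.

Record env (I : instance) : Type := {
  eR : nat -> R;
  eN : nat -> Name I;
  eG : nat -> Geo I;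
  eP : nat -> PoI I
}.
Arguments eR {I}. Arguments eN {I}. Arguments eG {I}. Arguments eP {I}.

Definition upd {A : Type} (f : nat -> A) (n : nat) (a : A) : nat -> A :=
  fun m => if Nat.eqb m n then a else f m.

Definition sort_dom (I : instance) (s : sort) : Type :=
  match s with SReal => R | SName => Name I | SGeo => Geo I | SPoI => PoI I end.

Definition env_upd (I : instance) (rho : env I) (s : sort) (n : nat) :
    sort_dom I s -> env I :=
  match s with
  | SReal => fun a => Build_env I (upd (eR rho) n a) (eN rho) (eG rho) (eP rho)
  | SName => fun a => Build_env I (eR rho) (upd (eN rho) n a) (eG rho) (eP rho)
  | SGeo  => fun a => Build_env I (eR rho) (eN rho) (upd (eG rho) n a) (eP rho)
  | SPoI  => fun a => Build_env I (eR rho) (eN rho) (eG rho) (upd (eP rho) n a)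
  end.

Fixpoint eval_r (I : instance) (rho : env I) (t : rterm) : R :=
  match t with
  | RVar n => eR rho n
  | RZero => 0
  | ROne => 1
  | RPlus a b => eval_r I rho a + eval_r I rho b
  | RMult a b => eval_r I rho a * eval_r I rho b
  | RBeta n => duration I (eP rho n)
  end.

Fixpoint sat (I : instance) (rho : env I) (f : form) : Prop :=
  match f with
  | FMoft o t x y => In (eN rho o, eval_r I rho t, eval_r I rho x, eval_r I rho y) (moft I)
  | FRollup x y g => rollup I (eval_r I rho x) (eval_r I rho y) (eG rho g)
  | FAlpha p g => alpha_rel I (eP rho p) (eG rho g)
  | FLt a b => eval_r I rho a < eval_r I rho b
  | FEqR a b => eval_r I rho a = eval_r I rho b
  | FEqN a b => eN rho a = eN rho b
  | FEqG a b => eG rho a = eG rho b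
  | FEqP a b => eP rho a = eP rho b
  | FTrue => True
  | FNot g => ~ sat I rho g
  | FAnd g h => sat I rho g /\ sat I rho h
  | FOr g h => sat I rho g \/ sat I rho h
  | FImp g h => sat I rho g -> sat I rho h
  | FEx s n g => exists a : sort_dom I s, sat I (env_upd I rho s n a) g
  | FAll s n g => forall a : sort_dom I s, sat I (env_upd I rho s n a) g
  end.

(* Main.v *)
Require Import Defs.
From Stdlib Require Import Reals QArith Qreals List Lra Lia Classical Sorting.Sorted.
Open Scope R_scope.

Definition mo_time r := FEx SReal 2 (FEx SReal 3 (FMoft 0 (RVar r) (RVar 2) (RVar 3))).
Definition fle r s := FNot (FLt (RVar s) (RVar r)).
Definition inreg lo hi gv := FAll SReal 4 (FAll SReal 2 (FAll SReal 3
  (FImp (FMoft 0 (RVar 4) (RVar 2) (RVar 3)) (FImp (fle lo 4) (FImp (fle 4 hi) (FRollup (RVar 2) (RVar 3) gv)))))).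
Definition stopf lo hi pv gv := FAnd (FAlpha pv gv) (FAnd (mo_time lo) (FAnd (mo_time hi)
  (FAnd (inreg lo hi gv) (FLt (RPlus (RBeta pv) (RVar lo)) (RVar hi))))).
Definition phi := FEx SPoI 0 (FAnd (stopf 0 1 0 0) (FAll SReal 5 (FAll SReal 6 (FAll SPoI 1 (FAll SGeo 1
  (FImp (FAnd (fle 5 0) (FAnd (fle 1 6) (stopf 5 6 1 1))) (FAnd (FEqR (RVar 5) (RVar 0)) (FEqR (RVar 6) (RVar 1))))))))).

Definition Stop (I : instance) (o : Name I) (g : Geo I) (p : PoI I) (ts tf : R) : Prop :=
  alpha_rel I p g /\ (exists x y, In (o,ts,x,y) (moft I)) /\ (exists x y, In (o,tf,x,y) (moft I)) /\
  (forall t x y, In (o,t,x,y) (moft I) -> ~ t < ts -> ~ tf < t -> rollup I x y g) /\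
  duration I p + ts < tf.
Definition Phi (I : instance) (o : Name I) (g : Geo I) (ts tf : R) : Prop :=
  exists p, Stop I o g p ts tf /\ forall a b (p' : PoI I) (g' : Geo I),
    (~ ts < a /\ ~ b < tf /\ Stop I o g' p' a b) -> a = ts /\ b = tf.

Lemma sat_phi I rho : sat I rho phi <-> Phi I (eN rho 0) (eG rho 0) (eR rho 0) (eR rho 1).
Proof. exact (iff_refl _). Qed.

Definition incr (tr : list (R*R*R)) := forall i, (S i < length tr)%nat ->
      pt_t (nth i tr (0, 0, 0)) < pt_t (nth (S i) tr (0, 0, 0)).
Notation T tr k := (pt_t (nth k tr (0,0,0))).

Lemma mono tr : incr tr -> forall i j, (i < j)%nat -> (j < length tr)%nat -> T tr i < T tr j.
Proof.
  intros H i j Hij. induction Hij as [|j Hij IH]; intros Hl.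
  - apply H; lia.
  - apply Rlt_trans with (T tr j). apply IH; lia. apply H; lia.
Qed.

Lemma mono_le tr : incr tr -> forall i j, (i <= j)%nat -> (j < length tr)%nat -> T tr i <= T tr j.
Proof.
  intros H i j Hij Hl. destruct (Nat.eq_dec i j). subst; lra.
  left; apply mono; auto; lia.
Qed.

Lemma inv_le tr : incr tr -> forall i j, (i < length tr)%nat -> T tr i <= T tr j -> (i <= j)%nat.
Proof.
  intros H i j Hi Hle. destruct (Nat.le_gt_cases i j); auto.
  assert (T tr j < T tr i) by (apply mono; auto). lra.
Qed.

Lemma inj tr : incr tr -> forall i j, (i < length tr)%nat -> (j < length tr)%nat -> T tr i = T tr j -> i = j.
Proof.
  intros H i j Hi Hj E. assert (i <= j)%nat by (apply (inv_le tr H); auto; lra).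
  assert (j <= i)%nat by (apply (inv_le tr H); auto; lra). lia.
Qed.

Lemma inv_lt tr : incr tr -> forall i j, (i < length tr)%nat -> T tr i < T tr j -> (i < j)%nat.
Proof.
  intros H i j Hi Hlt. destruct (Nat.le_gt_cases j i); auto.
  assert (T tr j <= T tr i) by (apply mono_le; auto; lia). lra.
Qed.

Lemma in_tr (tr : list (R*R*R)) k : (k < length tr)%nat ->
  In (T tr k, pt_x (nth k tr (0,0,0)), pt_y (nth k tr (0,0,0))) tr.
Proof.
  intros H. pose proof (nth_In tr (0,0,0) H) as Hi.
  destruct (nth k tr (0,0,0)) as [[a b] c]. exact Hi.
Qed.

Lemma from_moft I o tr t x y : is_trajectory_of I o tr -> In (o,t,x,y) (moft I) ->
  exists k, (k < length tr)%nat /\ T tr k = t /\ pt_x (nth k tr (0,0,0)) = x /\ pt_y (nth k tr (0,0,0)) = y.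
Proof.
  intros [Htr _] Hm. apply Htr in Hm. apply In_nth with (d := (0,0,0)) in Hm.
  destruct Hm as [k [Hk E]]. exists k. rewrite E. auto.
Qed.

Lemma to_moft I o tr k : is_trajectory_of I o tr -> (k < length tr)%nat ->
  In (o, T tr k, pt_x (nth k tr (0,0,0)), pt_y (nth k tr (0,0,0))) (moft I).
Proof. intros [Htr _] Hk. apply Htr. apply in_tr; auto. Qed.

Lemma alpha_geos I p : wf_instance I -> In p (pois I) -> In (alpha I p) (geos I).
Proof. intros (_&_&H&_) Hp. apply H. eauto. Qed.

Lemma main I o tr g ts tf : wf_instance I -> is_trajectory_of I o tr ->
  (Phi I o g ts tf <-> exists p, In p (pois I) /\ alpha I p = g /\ stop_in I tr p ts tf).
Proof.
  intros W Htr. pose proof (proj2 Htr) as Hinc. fold (incr tr) in Hinc.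
  split.
  - intros [p [[[Hp Hal] [[x1 [y1 M1]] [[x2 [y2 M2]] [Hr Hd]]]] MAX]]. subst g.
    destruct (from_moft _ _ _ _ _ _ Htr M1) as [k1 [Hk1 [E1 _]]].
    destruct (from_moft _ _ _ _ _ _ Htr M2) as [k2 [Hk2 [E2 _]]].
    assert (Dp : 0 < duration I p) by (destruct W as (_&_&_&_&_&W); auto).
    assert (Hlt : (k1 < k2)%nat) by (apply (inv_lt tr Hinc); auto; lra).
    exists p. split; [auto|split; [auto|]].
    exists k1, (k2 - k1)%nat. split; [|split].
    + split; [auto|split; [lia|split]].
      * intros j Hj. simpl.
        assert (Hkj : (k1 + j < length tr)%nat) by lia.
        pose proof (to_moft _ _ _ _ Htr Hkj) as Hm.
        apply Hr in Hm.
        -- apply Hm.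
        -- pose proof (mono_le tr Hinc k1 (k1+j) ltac:(lia) Hkj). lra.
        -- pose proof (mono_le tr Hinc (k1+j) k2 ltac:(lia) Hk2). lra.
      * replace (k1 + (k2 - k1))%nat with k2 by lia. lra.
    + intros i' l' Hi' Hl' [p' [Hp' [Hlen' [Hreg' Hd']]]].
      assert (Hi'l : (i' < length tr)%nat) by lia.
      destruct (MAX (T tr i') (T tr (i'+l')) p' (alpha I p')) as [A1 A2].
      { split; [|split].
        - pose proof (mono_le tr Hinc i' k1 ltac:(lia) Hk1). lra.
        - pose proof (mono_le tr Hinc (k1 + (k2-k1)) (i'+l') ltac:(lia) ltac:(lia)).
          replace (k1 + (k2 - k1))%nat with k2 in H by lia. lra.
        - split; [split; auto|split; [|split; [|split]]].
          + do 2 eexists. apply to_moft; eauto.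
          + do 2 eexists. apply to_moft; eauto.
          + intros t x y Hm H1 H2.
            destruct (from_moft _ _ _ _ _ _ Htr Hm) as [k [Hk [Et [Ex Ey]]]].
            assert (i' <= k)%nat by (apply (inv_le tr Hinc); auto; lra).
            assert (k <= i' + l')%nat by (apply (inv_le tr Hinc); auto; lra).
            split; [apply alpha_geos; auto|].
            specialize (Hreg' (k - i')%nat ltac:(lia)). simpl in Hreg'.
            replace (i' + (k - i'))%nat with k in Hreg' by lia.
            rewrite <- Ex, <- Ey. exact Hreg'.
          + lra. }
      assert (i' = k1) by (apply (inj tr Hinc); auto; lra).
      assert (i' + l' = k2)%nat by (apply (inj tr Hinc); auto; lra).
      split; lia.
    + split; auto. replace (k1 + (k2 - k1))%nat with k2 by lia. auto.
  - intros [p [Hp [Hal [i [l [[_ [Hlen [Hreg Hd]]] [MAX [Ets Etf]]]]]]]]. subst g ts tf.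
    exists p. split.
    + split; [split; auto|split; [|split; [|split]]].
      * do 2 eexists. apply to_moft; eauto. lia.
      * do 2 eexists. apply to_moft; eauto.
      * intros t x y Hm H1 H2.
        destruct (from_moft _ _ _ _ _ _ Htr Hm) as [k [Hk [Et [Ex Ey]]]].
        assert (i <= k)%nat by (apply (inv_le tr Hinc); auto; try lia; lra).
        assert (k <= i + l)%nat by (apply (inv_le tr Hinc); auto; lra).
        split; [apply alpha_geos; auto|].
        specialize (Hreg (k - i)%nat ltac:(lia)). simpl in Hreg.
        replace (i + (k - i))%nat with k in Hreg by lia.
        rewrite <- Ex, <- Ey. exact Hreg.
      * lra.
    + intros a b p' g' [H1 [H2 [[Hp' Hal'] [[x1 [y1 M1]] [[x2 [y2 M2]] [Hr Hd']]]]]].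
      destruct (from_moft _ _ _ _ _ _ Htr M1) as [k1 [Hk1 [E1 _]]].
      destruct (from_moft _ _ _ _ _ _ Htr M2) as [k2 [Hk2 [E2 _]]].
      assert (Dp : 0 < duration I p') by (destruct W as (_&_&_&_&_&W); auto).
      assert (Hlt : (k1 < k2)%nat) by (apply (inv_lt tr Hinc); auto; lra).
      assert (k1 <= i)%nat by (apply (inv_le tr Hinc); auto; lra).
      assert (i + l <= k2)%nat by (apply (inv_le tr Hinc); auto; lia || lra).
      destruct (MAX k1 (k2 - k1)%nat ltac:(lia) ltac:(lia)) as [A1 A2].
      { exists p'. split; [auto|split; [lia|split]].
        - intros j Hj. simpl.
          assert (Hkj : (k1 + j < length tr)%nat) by lia.
          pose proof (to_moft _ _ _ _ Htr Hkj) as Hm.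
          subst g'. apply Hr in Hm.
          + apply Hm.
          + pose proof (mono_le tr Hinc k1 (k1+j) ltac:(lia) Hkj). lra.
          + pose proof (mono_le tr Hinc (k1+j) k2 ltac:(lia) Hk2). lra.
        - replace (k1 + (k2 - k1))%nat with k2 by lia. lra. }
      subst k1. replace (i + (k2 - i))%nat with k2 in A2 by lia. subst l.
      replace (i + (k2 - i))%nat with k2 by lia. split; lra.
Qed.

Lemma proj_exists {N : Type} (M : list (N*R*R*R)) (o : N) :
  exists L : list (R*R*R), forall t x y, In (t,x,y) L <-> In (o,t,x,y) M.
Proof.
  induction M as [|[[[o' t'] x'] y'] M [L IH]].
  - exists nil. simpl. tauto.
  - destruct (classic (o' = o)) as [E|E].
    + subst. exists ((t',x',y') :: L). intros t x y. simpl. rewrite IH.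
      split; intros [H|H]; auto; left; congruence.
    + exists L. intros t x y. simpl. rewrite IH. split; auto. intros [H|H]; auto.
      congruence.
Qed.

Definition tlt (a b : R*R*R) := pt_t a < pt_t b.

Fixpoint ins (a : R*R*R) (l : list (R*R*R)) : list (R*R*R) :=
  match l with
  | nil => a :: nil
  | b :: l' => if Rlt_dec (pt_t a) (pt_t b) then a :: b :: l' else b :: ins a l'
  end.

Lemma in_ins a l z : In z (ins a l) <-> a = z \/ In z l.
Proof.
  induction l as [|b l IH]; simpl. tauto.
  destruct (Rlt_dec _ _); simpl. tauto. rewrite IH. tauto.
Qed.

Lemma ins_sorted a l : StronglySorted tlt l -> (forall z, In z l -> pt_t z <> pt_t a) ->
  StronglySorted tlt (ins a l).
Proof.
  induction l as [|b l IH]; intros Hs Hn; simpl.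
  - constructor; constructor.
  - inversion Hs as [|? ? Hs' Hf]; subst.
    destruct (Rlt_dec _ _) as [Hlt|Hlt].
    + constructor. constructor; auto. constructor; auto.
      rewrite Forall_forall in *. intros z Hz. unfold tlt in *.
      specialize (Hf z Hz). lra.
    + constructor. apply IH; auto. intros z Hz; apply Hn; simpl; auto.
      rewrite Forall_forall in *. intros z Hz. apply in_ins in Hz as [<-|Hz]; auto.
      unfold tlt. assert (pt_t b <> pt_t a) by (apply Hn; simpl; auto). lra.
Qed.

Lemma sorted_exists (L : list (R*R*R)) :
  (forall p q, In p L -> In q L -> pt_t p = pt_t q -> p = q) ->
  exists tr, (forall z, In z tr <-> In z L) /\ StronglySorted tlt tr.
Proof.
  induction L as [|a L IH]; intros Hf.
  - exists nil. split. simpl; tauto. constructor.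
  - destruct IH as [tr [Hin Hs]]. { intros; apply Hf; simpl; auto. }
    destruct (classic (exists z, In z tr /\ pt_t z = pt_t a)) as [[z [Hz Ez]]|Hn].
    + assert (z = a) by (apply Hf; simpl; auto; right; apply Hin; auto). subst z.
      exists tr. split; auto. intros w. simpl. rewrite Hin. split; auto.
      intros [<-|H]; auto. apply Hin; auto.
    + exists (ins a tr). split.
      * intros w. rewrite in_ins, Hin. simpl. split; intros [H|H]; auto.
      * apply ins_sorted; auto. intros w Hw E. apply Hn; eauto.
Qed.

Lemma ss_incr tr : StronglySorted tlt tr -> incr tr.
Proof.
  induction tr as [|a tr IH]; intros Hs i Hi; simpl in Hi. lia.
  inversion Hs as [|? ? Hs' Hf]; subst.
  destruct i as [|i].
  - destruct tr as [|b tr]. simpl in Hi; lia. simpl. inversion Hf; auto.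
  - simpl. apply IH; auto. lia.
Qed.

Lemma traj_exists I o : wf_instance I -> exists tr, is_trajectory_of I o tr.
Proof.
  intros W. destruct (proj_exists (moft I) o) as [L HL].
  destruct (sorted_exists L) as [tr [Hin Hs]].
  { intros [[t x] y] [[t' x'] y'] H1 H2 E. unfold pt_t in E; simpl in E. subst t'.
    apply HL in H1. apply HL in H2. destruct W as (_&W&_).
    destruct (W _ _ _ _ _ _ H1 H2). subst; auto. }
  exists tr. split. intros t x y. rewrite Hin. apply HL. apply ss_incr; auto.
Qed.

Theorem proposition3 :
  exists phi : form,
    forall I : instance, wf_instance I ->
      forall rho : env I,
        sat I rho phi <-> in_SM_MOFT I (eN rho 0) (eG rho 0) (eR rho 0) (eR rho 1).
Proof.
  exists phi. intros I W rho. rewrite sat_phi. split.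
  - intro H. destruct (traj_exists I (eN rho 0) W) as [tr Htr].
    pose proof H as H'. apply (main I (eN rho 0) tr) in H; auto.
    destruct H as [p [Hp [Hal Hs]]]. exists tr. split; auto. split.
    + destruct H' as [p0 [[_ [[x [y M]] _]] _]]. apply (proj1 Htr) in M.
      intro E; rewrite E in M; destruct M.
    + exists p; auto.
  - intros [tr [Htr [_ [p [Hp [Hal Hs]]]]]]. apply (main I (eN rho 0) tr); eauto.
Qed.
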